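(* There is an absolute constant $c>0$ such that for every $n\ge 1$ and $N=2^n$ there is a 2D SLP with at most $c\cdot n$ nonterminals deriving $\mathsf{ShiftBin}_N$.
   Context: Alphabet $\Sigma\supseteq\{0,1,\$\}$. A 2D string of size $p\times q$ is a $p\times q$ array over $\Sigma$. For $N=2^n$, $\mathsf{Bin}_N$ is the $N\times(n+2)$ 2D string whose $i$-th row ($i\in[1..N]$) is $\$\,b_{i-1}\,\$$, where $b_{i-1}$ is the $n$-bit binary representation of $i-1$. $\mathsf{ShiftBin}_N$ is the $2N\times N(n+2)$ 2D string such that for each $j\in[1..N]$, the subarray formed by rows $j,\dots,j+N-1$ and columns $(j-1)(n+2)+1,\dots,j(n+2)$ equals $\mathsf{Bin}_N$ (i.e., the $j$-th copy of $\mathsf{Bin}_N$ shifted down by $j-1$ rows), and all other entries are $0$. A 2D SLP is a triple $(\mathcal V,\mathcal S,\rho)$: a finite set $\mathcal V$ of nonterminals each with a dimension (height, width), a starting nonterminal $\mathcal S$, and for each $X\in\mathcal V$ a production $\rho(X)$ which is a character $\sigma\in\Sigma$ ($X$ of size $1\times1$), or a horizontal concatenation $Y\oplus_{\mathrm h}Z$ ($Y$ and $Z$ of equal height, $Z$ placed to the right of $Y$), or a vertical concatenation $Y\oplus_{\mathrm v}Z$ ($Y,Z$ of equal width, $Z$ placed below $Y$), with $Y,Z\in\mathcal V$ and the occurrence relation acyclic; it derives the 2D string $\exp(\mathcal S)$ obtained by recursive expansion. *)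

(* Defs.v *)
From mathcomp Require Import all_boot.
Set Implicit Arguments. Unset Strict Implicit. Unset Printing Implicit Defensive.

Section TwoD.
Variable T : Type.

(* A 2D string of size h x w over T: (h, w, f) where only the entries
   f i j with i < h, j < w (0-indexed) matter. *)
Definition str2D := (nat * nat * (nat -> nat -> T))%type.

Definition height (s : str2D) : nat := s.1.1.
Definition width (s : str2D) : nat := s.1.2.
Definition entry (s : str2D) : nat -> nat -> T := s.2.

Definition str2D_eq (s t : str2D) : Prop :=
  height s = height t /\ width s = width t /\
  forall i j, i < height s -> j < width s -> entry s i j = entry t i j.

(* Productions of a 2D SLP.  Nonterminals are numbered 0, 1, ... in the
   order of the list; a production of nonterminal k may only refer to
   nonterminals with index < k (this encodes acyclicity). *)
Inductive prod2D :=
  | PChar of T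
  | PHor of nat & nat
  | PVer of nat & nat.

Definition slp2D := seq prod2D.

Definition step2D (acc : seq str2D) (r : prod2D) : option str2D :=
  match r with
  | PChar a => Some (1, 1, fun _ _ => a)
  | PHor y z =>
      match onth acc y, onth acc z with
      | Some sy, Some sz =>
          if height sy == height sz then
            Some (height sy, width sy + width sz,
                  fun i j => if j < width sy then entry sy i j
                             else entry sz i (j - width sy))
          else None
      | _, _ => None
      end
  | PVer y z =>
      match onth acc y, onth acc z with
      | Some sy, Some sz =>
          if width sy == width sz then
            Some (height sy + height sz, width sy,
                  fun i j => if i < height sy then entry sy i j
                             else entry sz (i - height sy) j)
          else None
      | _, _ => None
      end
  end.

Fixpoint evalAll (acc : seq str2D) (g : slp2D) : option (seq str2D) :=
  match g with
  | [::] => Some acc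
  | r :: g' =>
      match step2D acc r with
      | Some s => evalAll (rcons acc s) g'
      | None => None
      end
  end.

Definition slp_derives (g : slp2D) (k : nat) (M : str2D) : Prop :=
  exists es, evalAll [::] g = Some es /\
    exists e, onth es k = Some e /\ str2D_eq e M.

Definition num_nonterminals (g : slp2D) : nat := size g.

Variables (zero one dollar : T).

(* Bin_N for N = 2^n: N x (n+2); row i (0-indexed) is  $ b_i $  where
   b_i is the n-bit binary representation of i, most significant bit first. *)
Definition bin_entry (n i t : nat) : T :=
  if (t == 0) || (t == n.+1) then dollar
  else if odd (i %/ 2 ^ (n - t)) then one else zero.

Definition Bin (n : nat) : str2D := (2 ^ n, n + 2, bin_entry n).

(* ShiftBin_N: 2N x N(n+2); the j-th copy (0-indexed) of Bin_N occupies
   rows j .. j+N-1 and columns j(n+2) .. (j+1)(n+2)-1; all else is 0. *)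
Definition shiftbin_entry (n r c : nat) : T :=
  let j := c %/ (n + 2) in
  let t := c %% (n + 2) in
  if (j <= r) && (r < j + 2 ^ n) then bin_entry n (r - j) t else zero.

Definition ShiftBin (n : nat) : str2D :=
  (2 * 2 ^ n, 2 ^ n * (n + 2), shiftbin_entry n).

End TwoD.

(* Main.v *)
Require Import Defs.
From mathcomp Require Import all_boot zify.
Set Implicit Arguments. Unset Strict Implicit. Unset Printing Implicit Defensive.

Section Infra.
Variable T : Type.
Implicit Types (g : slp2D T) (M A B : str2D T).

Definition hcat (A B : str2D T) : str2D T :=
  (height A, width A + width B,
   fun i j => if j < width A then entry A i j else entry B i (j - width A)).
Definition vcat (A B : str2D T) : str2D T :=
  (height A + height B, width A,
   fun i j => if i < height A then entry A i j else entry B (i - height A) j).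
Definition cst h w (a : T) : str2D T := (h, w, fun _ _ => a).

Lemma evalAll_cat acc g h :
  evalAll acc (g ++ h) = obind (fun es => evalAll es h) (evalAll acc g).
Proof.
elim: g acc => [|r g IH] acc //=.
by case: step2D => //.
Qed.

Lemma evalAll_prefix acc g es : evalAll acc g = Some es -> exists t, es = acc ++ t.
Proof.
elim: g acc => [|r g IH] acc /=; first by case=> <-; exists [::]; rewrite cats0.
case: step2D => // s /IH [t ->]; exists (s :: t); by rewrite cat_rcons.
Qed.

Lemma evalAll_size acc g es : evalAll acc g = Some es -> size es = size acc + size g.
Proof.
elim: g acc => [|r g IH] acc /=; first by case=> <-; rewrite addn0.
case: step2D => // s /IH ->; by rewrite size_rcons addSnnS.
Qed.

Lemma str2D_eq_trans A B (C : str2D T) : str2D_eq A B -> str2D_eq B C -> str2D_eq A C.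
Proof.
case=> h1 [w1 e1] [h2 [w2 e2]]; split; first by rewrite h1.
split; first by rewrite w1.
move=> i j Hi Hj; rewrite e1 // e2 //; by rewrite -?h1 -?w1.
Qed.

Definition Le g g' := forall k M, slp_derives g k M -> slp_derives g' k M.

Lemma Le_refl g : Le g g. Proof. by []. Qed.
Lemma Le_trans g1 g2 g3 : Le g1 g2 -> Le g2 g3 -> Le g1 g3.
Proof. by move=> H1 H2 k M /H1 /H2. Qed.

Lemma derives_eq g k M M' : slp_derives g k M -> str2D_eq M M' -> slp_derives g k M'.
Proof.
case=> es [He [e [Ho Hq]]] HM; exists es; split => //; exists e; split => //.
exact: str2D_eq_trans Hq HM.
Qed.

Lemma Le_of g h k N : slp_derives (g ++ h) k N -> Le g (g ++ h).
Proof.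
case=> es' [He' _] k' M [es [He [e [Ho Hq]]]].
exists es'; split => //; exists e; split => //.
move: He'; rewrite evalAll_cat He /= => /evalAll_prefix [t ->].
by rewrite onth_cat -onthTE Ho.
Qed.

Definition Ok g := exists es, evalAll [::] g = Some es.
Lemma add_step g r (N : str2D T) :
  Ok g ->
  (forall es, evalAll [::] g = Some es -> exists s, step2D es r = Some s /\ str2D_eq s N) ->
  slp_derives (rcons g r) (size g) N.
Proof.
case=> es He Hs; case: (Hs es He) => s [Hst Hq].
exists (rcons es s); split.
  by rewrite -cats1 evalAll_cat He /= Hst.
exists s; split => //.
have -> : size g = size es by rewrite (evalAll_size He).
by rewrite -cats1 onth_cat ltnn subnn.
Qed.

Lemma Ok_of g k M : slp_derives g k M -> Ok g.
Proof. by case=> es [He _]; exists es. Qed.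

Lemma Ok_nil : Ok [::]. Proof. by exists [::]. Qed.

Lemma Le_rcons g r k N : slp_derives (rcons g r) k N -> Le g (rcons g r).
Proof. rewrite -cats1; exact: Le_of. Qed.

Lemma add_char g (a : T) : Ok g -> slp_derives (rcons g (PChar a)) (size g) (cst 1 1 a).
Proof.
move=> Hg; apply: add_step => // es _; exists (cst 1 1 a); split => //.
Qed.

Lemma derives_det g k M es : slp_derives g k M -> evalAll [::] g = Some es ->
  exists e, onth es k = Some e /\ str2D_eq e M.
Proof. move=> [es' [He' H]] He; move: He'; rewrite He; by case=> ->. Qed.

End Infra.
Section Infra2.
Variable T : Type.
Lemma hcat_eq (A A' B B' : str2D T) : str2D_eq A A' -> str2D_eq B B' -> height A = height B ->
  str2D_eq (hcat A B) (hcat A' B').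
Proof.
case: A => [[ha wa] fa]; case: A' => [[ha' wa'] fa']; case: B => [[hb wb] fb]; case: B' => [[hb' wb'] fb'].
rewrite /str2D_eq /hcat /height /width /entry /= => -[h1 [w1 q1]] [h2 [w2 q2]] hab.
split => //; split; first by rewrite w1 w2.
move=> i j Hi Hj; rewrite -w1; case: ifP => Hjl; first exact: q1.
apply: q2; first by rewrite -hab. 
move: Hj Hjl; lia.
Qed.

Lemma vcat_eq (A A' B B' : str2D T) : str2D_eq A A' -> str2D_eq B B' -> width A = width B ->
  str2D_eq (vcat A B) (vcat A' B').
Proof.
case: A => [[ha wa] fa]; case: A' => [[ha' wa'] fa']; case: B => [[hb wb] fb]; case: B' => [[hb' wb'] fb'].
rewrite /str2D_eq /vcat /height /width /entry /= => -[h1 [w1 q1]] [h2 [w2 q2]] hab.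
split; first by rewrite h1 h2.
split => //.
move=> i j Hi Hj; rewrite -h1; case: ifP => Hil; first exact: q1.
apply: q2; last by rewrite -hab. 
move: Hi Hil; lia.
Qed.

Lemma add_hor (g : slp2D T) y z A B : slp_derives g y A -> slp_derives g z B -> height A = height B ->
  slp_derives (rcons g (@PHor T y z)) (size g) (hcat A B).
Proof.
move=> Hy Hz HAB; apply: add_step; first exact: Ok_of Hy.
move=> es He.
case: (derives_det Hy He) => ey [Ey q1].
case: (derives_det Hz He) => ez [Ez q2].
have [h1 _] := q1; have [h2 _] := q2.
rewrite /= Ey Ez.
have -> : (height ey == height ez) = true by apply/eqP; rewrite h1 h2.
exists (hcat ey ez); split; first reflexivity.
apply: hcat_eq => //; by rewrite h1 h2.
Qed.

Lemma add_ver (g : slp2D T) y z A B : slp_derives g y A -> slp_derives g z B -> width A = width B ->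
  slp_derives (rcons g (@PVer T y z)) (size g) (vcat A B).
Proof.
move=> Hy Hz HAB; apply: add_step; first exact: Ok_of Hy.
move=> es He.
case: (derives_det Hy He) => ey [Ey q1].
case: (derives_det Hz He) => ez [Ez q2].
have [_ [w1 _]] := q1; have [_ [w2 _]] := q2.
rewrite /= Ey Ez.
have -> : (width ey == width ez) = true by apply/eqP; rewrite w1 w2.
exists (vcat ey ez); split; first reflexivity.
apply: vcat_eq => //; by rewrite w1 w2.
Qed.
End Infra2.

Section Math.
Variables (T : Type) (zero one dollar : T).

Lemma cst_hcat h h' w1 w2 w (a : T) : h = h' -> w1 + w2 = w ->
  str2D_eq (hcat (cst h w1 a) (cst h' w2 a)) (cst h w a).
Proof.
move=> <- <-; split => //; split => //= i j _ _; by case: ifP.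
Qed.

Lemma cst_vcat h1 h2 h w w' (a : T) : w = w' -> h1 + h2 = h ->
  str2D_eq (vcat (cst h1 w a) (cst h2 w' a)) (cst h w a).
Proof.
move=> <- <-; split => //; split => //= i j _ _; by case: ifP.
Qed.

Definition Bspec k : str2D T :=
  (2 ^ k, k, fun i t => if odd (i %/ 2 ^ (k - t.+1)) then one else zero).

Lemma B1_eq : str2D_eq (vcat (cst 1 1 zero) (cst 1 1 one)) (Bspec 1).
Proof.
split => //; split => //= i j Hi Hj.
rewrite /entry /=; case: i Hi => [|[|i]] //= _; by case: j Hj.
Qed.

Lemma Bstep_eq k :
  str2D_eq (vcat (hcat (cst (2^k) 1 zero) (Bspec k)) (hcat (cst (2^k) 1 one) (Bspec k)))
           (Bspec k.+1).
Proof.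
rewrite /str2D_eq /vcat /hcat /cst /Bspec /height /width /entry /=.
split; first by rewrite expnS; lia.
split => // i t Hi Ht.
have Hk : 0 < 2 ^ k by rewrite expn_gt0.
case: ifP => Hil; case: ifP => Ht0.
- have -> : t = 0 by lia.
  by rewrite subn1 /= divn_small.
- have -> : k.+1 - t.+1 = k - (t - 1).+1 by lia.
  done.
- have -> : t = 0 by lia.
  rewrite subn1 /=.
  have -> : i = 1 * 2 ^ k + (i - 2 ^ k) by lia.
  rewrite divnMDl // divn_small //; move: Hi; lia.
- have Htk : t <= k by lia.
  have -> : k.+1 - t.+1 = k - (t - 1).+1 by lia.
  have E : 2 ^ k = 2 ^ t * 2 ^ (k - t).
    by rewrite -expnD; congr (2 ^ _); lia.
  have -> : k - (t - 1).+1 = k - t by lia.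
  have -> : i = 2 ^ t * 2 ^ (k - t) + (i - 2 ^ k) by lia.
  rewrite divnMDl ?expn_gt0 // oddD oddX.
  have -> : (t == 0) = false by lia.
  have -> : 2 ^ t * 2 ^ (k - t) + (i - 2 ^ k) - 2 ^ k = i - 2 ^ k by lia.
  by [].
Qed.

Lemma Bin_eq n :
  str2D_eq (hcat (hcat (cst (2^n) 1 dollar) (Bspec n)) (cst (2^n) 1 dollar))
           (Bin zero one dollar n).
Proof.
rewrite /str2D_eq /vcat /hcat /cst /Bspec /Bin /height /width /entry /=.
split => //; split; first lia.
move=> i t Hi Ht; rewrite /bin_entry.
case: ifP => H1.
- case: ifP => H2; first by have -> : t = 0 by lia.
  have -> : (t == 0) = false by lia.
  have -> : (t == n.+1) = false by lia.
  by have -> : n - (t - 1).+1 = n - t by lia.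
- have -> : t = n.+1 by lia.
  by rewrite eqxx orbT.
Qed.

Definition Xspec n k : str2D T := (2^n + 2^k, 2^k * (n+2), shiftbin_entry zero one dollar n).
Definition Zb n k : str2D T := cst (2^k) (2^k * (n+2)) zero.

Lemma X0_eq n : str2D_eq (vcat (Bin zero one dollar n) (cst 1 (n.+2) zero)) (Xspec n 0).
Proof.
rewrite /str2D_eq /vcat /cst /Bin /Xspec /height /width /entry /=.
split; first lia. split; first lia.
move=> r c Hr Hc; rewrite /shiftbin_entry.
rewrite divn_small // modn_small // add0n subn0 /=.
by case: ifP.
Qed.

Lemma Xstep_eq n k :
  str2D_eq (hcat (vcat (Xspec n k) (Zb n k)) (vcat (Zb n k) (Xspec n k))) (Xspec n k.+1).
Proof.
rewrite /str2D_eq /vcat /hcat /cst /Zb /Xspec /height /width /entry /=.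
split; first by rewrite expnS; lia.
split; first by rewrite expnS; lia.
move=> r c Hr Hc.
have Hd : 0 < n + 2 by lia.
case: ifP => Hcl.
- case: ifP => Hrl // .
  rewrite /shiftbin_entry.
  have : c %/ (n + 2) < 2 ^ k by rewrite ltn_divLR.
  case: ifP => // /andP [? ?]; lia.
- case: ifP => Hrl.
  + rewrite /shiftbin_entry.
    have : 2 ^ k <= c %/ (n + 2) by rewrite leq_divRL //; lia.
    case: ifP => // /andP [? ?]; lia.
  + set c' := c - 2 ^ k * (n + 2).
    have -> : c = 2 ^ k * (n + 2) + c' by rewrite /c'; lia.
    rewrite /shiftbin_entry divnMDl // modnMDl.
    set j := c' %/ (n + 2).
    have -> : (j <= r - 2 ^ k) && (r - 2 ^ k < j + 2 ^ n) =
              (2 ^ k + j <= r) && (r < 2 ^ k + j + 2 ^ n).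
      apply/idP/idP => /andP [? ?]; apply/andP; split; lia.
    by have -> : r - 2 ^ k - j = r - (2 ^ k + j) by lia.
Qed.

Lemma Zstep_eq n k :
  str2D_eq (vcat (hcat (Zb n k) (Zb n k)) (hcat (Zb n k) (Zb n k))) (Zb n k.+1).
Proof.
rewrite /str2D_eq /vcat /hcat /cst /Zb /height /width /entry /=.
split; first by rewrite expnS; lia.
split; first by rewrite expnS; lia.
by move=> i j _ _; case: ifP; case: ifP.
Qed.

Lemma Xn_eq n : str2D_eq (Xspec n n) (ShiftBin zero one dollar n).
Proof.
rewrite /str2D_eq /Xspec /ShiftBin /height /width /entry /=.
split; first lia. by split.
Qed.
End Math.

Ltac lift L := repeat match goal with
  | F : slp_derives ?g0 _ _ |- _ =>
      match type of L with Le g0 _ => move: (L _ _ F) => {}F end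
  end.

Ltac dims := rewrite /height /width /cst /Bspec /Xspec /Zb /hcat /vcat /=; try lia.

Section Build.
Variables (T : Type) (zero one dollar : T).

Lemma zrow_st m (g : slp2D T) z (a : T) : slp_derives g z (cst 1 1 a) ->
  exists g' k, Le g g' /\ size g' <= size g + m /\ slp_derives g' k (cst 1 m.+1 a).
Proof.
move=> Fz; elim: m => [|m [g1 [k [L [S F]]]]].
  by exists g, z; split => //; rewrite addn0.
lift L.
have H := add_hor F Fz (erefl 1).
have L2 := Le_rcons H; lift L2.
exists (rcons g1 (@PHor T k z)), (size g1); split; first exact: Le_trans L L2.
split; first by rewrite size_rcons; lia.
apply: derives_eq H _; apply: cst_hcat => //; lia.
Qed.

Lemma col_st k (g : slp2D T) x (a : T) : slp_derives g x (cst 1 1 a) ->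
  exists g' y, Le g g' /\ size g' <= size g + k /\ slp_derives g' y (cst (2^k) 1 a).
Proof.
move=> Fx; elim: k => [|k [g1 [y [L [S F]]]]].
  by exists g, x; split => //; rewrite addn0.
have H := add_ver F F (erefl 1).
have L2 := Le_rcons H.
exists (rcons g1 (@PVer T y y)), (size g1); split; first exact: Le_trans L L2.
split; first by rewrite size_rcons; lia.
apply: derives_eq H _; apply: cst_vcat => //; rewrite expnS; lia.
Qed.

Lemma B_st k (g : slp2D T) b zc oc :
  slp_derives g b (Bspec zero one 1) -> slp_derives g zc (cst 1 1 zero) ->
  slp_derives g oc (cst 1 1 one) ->
  exists g' b' zc' oc', Le g g' /\ size g' <= size g + 5 * k /\
    slp_derives g' b' (Bspec zero one k.+1) /\ slp_derives g' zc' (cst (2^k) 1 zero) /\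
    slp_derives g' oc' (cst (2^k) 1 one).
Proof.
move=> Fb Fzc Foc; elim: k => [|k [g1 [b1 [zc1 [oc1 [L [S [Fb1 [Fz1 Fo1]]]]]]]]].
  by exists g, b, zc, oc; rewrite muln0 addn0; do !split => //.
clear Fb Fzc Foc.
have H1 := add_ver Fz1 Fz1 (erefl 1).
have L1 := Le_rcons H1; lift L1.
have {}H1 : slp_derives (rcons g1 (@PVer T zc1 zc1)) (size g1) (cst (2^k.+1) 1 zero) by apply: derives_eq H1 _; apply: cst_vcat => //; rewrite expnS; lia.
set g2 := rcons g1 _ in H1 L1 Fb1 Fz1 Fo1.
have H2 := add_ver Fo1 Fo1 (erefl 1).
have L2 := Le_rcons H2; lift L2.
have {}H2 : slp_derives (rcons g2 (@PVer T oc1 oc1)) (size g2) (cst (2^k.+1) 1 one) by apply: derives_eq H2 _; apply: cst_vcat => //; rewrite expnS; lia.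
set g3 := rcons g2 _ in H1 H2 L2 Fb1 Fz1 Fo1.
have H3 := add_hor H1 Fb1 (erefl _).
have L3 := Le_rcons H3; lift L3.
set g4 := rcons g3 _ in H1 H2 H3 L3 Fb1 Fz1 Fo1.
have H4 := add_hor H2 Fb1 (erefl _).
have L4 := Le_rcons H4; lift L4.
set g5 := rcons g4 _ in H1 H2 H3 H4 L4 Fb1 Fz1 Fo1.
have H5 := add_ver H3 H4 (erefl _).
have L5 := Le_rcons H5; lift L5.
set g6 := rcons g5 _ in H1 H2 H3 H4 H5 L5 Fb1 Fz1 Fo1.
exists g6, (size g5), (size g1), (size g2).
split; first by apply: (Le_trans L); apply: (Le_trans L1); apply: (Le_trans L2);
  apply: (Le_trans L3); apply: (Le_trans L4).
split; first by rewrite /g6 /g5 /g4 /g3 /g2 !size_rcons; lia.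
split; first by apply: derives_eq H5 _; apply: Bstep_eq.
done.
Qed.

Lemma X_st n k (g : slp2D T) x z :
  slp_derives g x (Xspec zero one dollar n 0) -> slp_derives g z (Zb zero n 0) ->
  exists g' x' z', Le g g' /\ size g' <= size g + 5 * k /\
    slp_derives g' x' (Xspec zero one dollar n k) /\ slp_derives g' z' (Zb zero n k).
Proof.
move=> Fx Fz; elim: k => [|k [g1 [x1 [z1 [L [S [Fx1 Fz1]]]]]]].
  by exists g, x, z; rewrite muln0 addn0; do !split => //.
clear Fx Fz.
have H1 := add_ver Fx1 Fz1 (erefl _).
have L1 := Le_rcons H1; lift L1.
set g2 := rcons g1 _ in H1 L1 Fx1 Fz1.
have H2 := add_ver Fz1 Fx1 (erefl _).
have L2 := Le_rcons H2; lift L2.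
set g3 := rcons g2 _ in H1 H2 L2 Fx1 Fz1.
have H3 := add_hor H1 H2 ltac:(dims).
have L3 := Le_rcons H3; lift L3.
set g4 := rcons g3 _ in H1 H2 H3 L3 Fx1 Fz1.
have H4 := add_hor Fz1 Fz1 (erefl _).
have L4 := Le_rcons H4; lift L4.
set g5 := rcons g4 _ in H1 H2 H3 H4 L4 Fx1 Fz1.
have H5 := add_ver H4 H4 (erefl _).
have L5 := Le_rcons H5; lift L5.
set g6 := rcons g5 _ in H1 H2 H3 H4 H5 L5 Fx1 Fz1.
exists g6, (size g3), (size g5).
split; first by apply: (Le_trans L); apply: (Le_trans L1); apply: (Le_trans L2);
  apply: (Le_trans L3); apply: (Le_trans L4).
split; first by rewrite /g6 /g5 /g4 /g3 /g2 !size_rcons; lia.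
split; first by apply: derives_eq H3 _; apply: Xstep_eq.
by apply: derives_eq H5 _; apply: Zstep_eq.
Qed.
End Build.

Theorem mainTheorem5 :
  exists c : nat, 0 < c /\
    forall (T : Type) (zero one dollar : T) (n : nat), 1 <= n ->
      exists (g : slp2D T) (k : nat),
        num_nonterminals g <= c * n /\
        slp_derives g k (ShiftBin zero one dollar n).
Proof.
exists 20; split => // T zero one dollar n Hn.
have F0 := add_char zero (Ok_nil T).
set g0 := rcons [::] _ in F0.
have F1 := add_char one (Ok_of F0).
have L := Le_rcons F1; lift L; clear L.
set g1 := rcons g0 _ in F0 F1.
have F2 := add_char dollar (Ok_of F1).
have L := Le_rcons F2; lift L; clear L.
set g2 := rcons g1 _ in F0 F1 F2.
have S2 : size g2 = 3 by [].
clearbody g2.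
have [g3 [zr [L [S3 Fzr]]]] := zrow_st n.+1 F0; lift L; clear L.
have [g4 [dc [L [S4 Fdc]]]] := col_st n F2; lift L; clear L.
have B1 := add_ver F0 F1 (erefl _).
have L := Le_rcons B1; lift L; clear L.
have {}B1 := derives_eq B1 (B1_eq zero one).
set g5 := rcons g4 _ in B1 F0 F1 F2 Fzr Fdc.
have S5 : size g5 = (size g4).+1 by rewrite size_rcons.
clearbody g5.
case: n Hn S3 S4 Fzr Fdc => [//|n'] _ S3 S4 Fzr Fdc.
have [g6 [bn [zc [oc [L [S6 [Fbn _]]]]]]] := B_st n' B1 F0 F1; lift L; clear L.
have H1 := add_hor Fdc Fbn (erefl _).
have L := Le_rcons H1; lift L; clear L.
set g7 := rcons g6 _ in H1 F0 F1 F2 Fzr Fdc Fbn B1.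
have H2 := add_hor H1 Fdc (erefl _).
have L := Le_rcons H2; lift L; clear L.
have {}H2 := derives_eq H2 (Bin_eq zero one dollar n'.+1).
set g8 := rcons g7 _ in H1 H2 F0 F1 F2 Fzr Fdc Fbn B1.
have H3 := add_ver H2 Fzr ltac:(dims).
have L := Le_rcons H3; lift L; clear L.
have {}H3 := derives_eq H3 (X0_eq zero one dollar n'.+1).
set g9 := rcons g8 _ in H1 H2 H3 F0 F1 F2 Fzr Fdc Fbn B1.
have Z0 : slp_derives g9 zr (Zb zero n'.+1 0).
  apply: derives_eq Fzr _. rewrite /str2D_eq. dims. rewrite expn0 mul1n; split => //; split => //; lia.
have [g10 [x [z [_ [S10 [Fx _]]]]]] := X_st n'.+1 H3 Z0.
exists g10, x; split; last exact: derives_eq Fx (Xn_eq zero one dollar n'.+1).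
rewrite /num_nonterminals.
move: S10; rewrite /g9 /g8 /g7 !size_rcons => S10.
lia.
Qed.
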